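(* Let $X$ be a binary $N\times t$ matrix that is 3-good, let $S\subseteq[t]$ with $|S|=3$, let $\mathbf{y}=r(X,S)$ and $H=H(X,3,\mathbf{y})=([t],E)$. Let $L_1=\log_2\log_2 t$, $L_2=3L_1$, and let $G'=([t],E')$ be the graph in which distinct vertices $v_1,v_2$ are adjacent iff there are at least $L_2$ hyperedges $e\in E$ with $v_1\in e$ and $v_2\in e$. Then every vertex of $G'$ has degree less than $L_1$.
   Context: For a binary $N\times t$ matrix $X$ with columns $x(1),\dots,x(t)$ and $S\subseteq[t]$, $r(X,S)=\bigvee_{j\in S}x(j)$ (coordinatewise Boolean OR). For $\mathbf{y}\in\{0,1\}^N$, $H(X,3,\mathbf{y})$ is the $3$-uniform hypergraph on $[t]$ whose hyperedges are all $3$-element $S\subseteq[t]$ with $r(X,S)=\mathbf{y}$. A $(3,k)$ configuration of size $L$ is a set of $L$ hyperedges $e_1,\dots,e_L$ with a set $U$, $|U|=k$, such that $e_i\cap e_j=U$ for all $i\ne j$. Fix $p\in(0,1)$; $\Pr_1(s,w)$ is the probability that the OR of $s$ independent uniformly random length-$N$ binary columns of weight $\lfloor pN\rfloor$ equals a fixed vector of weight $w$; $\Pr_2(s,w_1,w)$ is the probability that the OR of $s$ such columns together with a fixed column $\mathbf{y}_1$ of weight $w_1$ equals a fixed vector $\mathbf{y}$ of weight $w$ with $\mathbf{y}\vee\mathbf{y}_1=\mathbf{y}$. With $L_1=\log_2\log_2 t$, $X$ is 3-good if: (1) for every $\mathbf{y}$, $H(X,3,\mathbf{y})$ has no $(3,1)$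 configuration of size $L_1$; (2) for every $\mathbf{y}$ with $|\mathbf{y}|=w$, $H(X,3,\mathbf{y})$ has no $(3,0)$ configuration of size $10\max(t^3\Pr_1(3,w),N)$; (3) for all $\mathbf{y},\mathbf{y}_1$ with $\mathbf{y}\vee\mathbf{y}_1=\mathbf{y}$, $|\mathbf{y}_1|=w_1$, $|\mathbf{y}|=w$, the number of $j$ with $\mathbf{y}_1\vee x(j)=\mathbf{y}$ is less than $10B(N,t)$, where $B(N,t)=t\Pr_2(1,w_1,w)$ if this exceeds $N$, $B(N,t)=N$ if $t^{-1/\sqrt{L_1}}\le t\Pr_2(1,w_1,w)\le N$, and $B(N,t)=L_1/10$ if $t\Pr_2(1,w_1,w)<t^{-1/\sqrt{L_1}}$; (4) for every $\mathbf{y}$ with $|\mathbf{y}|=w$ and integer $w_1\le w$, the number of pairwise disjoint pairs $\{j_1,j_2\}\subseteq[t]$ with $x(j_1)\vee x(j_2)\vee\mathbf{y}=\mathbf{y}$ and $|x(j_1)\vee x(j_2)|=w_1$ is less than $10\max(N,\binom{w}{w_1}t^2\Pr_1(2,w_1))$. *)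

(* Defs.v *)
From mathcomp Require Import all_boot.
From Stdlib Require Import Reals.

Set Implicit Arguments.
Unset Strict Implicit.
Unset Printing Implicit Defensive.

(* A binary N x t matrix is given by its columns; column j is the support
   {i | X i j = 1} of the j-th column vector.  A binary vector of length N is
   its support, a set of 'I_N, and its weight is the cardinality. *)
Definition bmatrix (N t : nat) := 'I_t -> {set 'I_N}.

Definition Rleb (a b : R) : bool := if Rle_dec a b then true else false.

Definition rOR (N t : nat) (X : bmatrix N t) (S : {set 'I_t}) : {set 'I_N} :=
  \bigcup_(j in S) X j.

Definition hedges (N t : nat) (X : bmatrix N t) (y : {set 'I_N}) : {set {set 'I_t}} :=
  [set e : {set 'I_t} | (#|e| == 3) && (rOR X e == y)].

Definition config (N t : nat) (X : bmatrix N t) (y : {set 'I_N}) (k : nat)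
  (F : {set {set 'I_t}}) : Prop :=
  F \subset hedges X y /\
  exists U : {set 'I_t}, #|U| = k /\
    forall e1 e2, e1 \in F -> e2 \in F -> e1 != e2 -> e1 :&: e2 = U.

Definition has_config (N t : nat) (X : bmatrix N t) (y : {set 'I_N}) (k : nat)
  (L : R) : Prop :=
  exists F, config X y k F /\ (L <= INR #|F|)%R.

Definition log2 (x : R) : R := (ln x / ln 2)%R.

Definition L1 (t : nat) : R := log2 (log2 (INR t)).

Definition colw (N : nat) (p : R) : nat := Z.to_nat (Int_part (p * INR N)).

(* canonical fixed vector of weight w (first w coordinates) *)
Definition fixvec (N w : nat) : {set 'I_N} := [set i : 'I_N | i < w].

(* Pr_1(s,w): probability that the OR of s independent uniform random columns
   of weight floor(pN) equals a fixed vector of weight w *)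
Definition Pr1 (N : nat) (p : R) (s w : nat) : R :=
  (INR #|[set f : {ffun 'I_s -> {set 'I_N}} |
            [forall i, #|f i| == colw N p] &&
            ((\bigcup_(i < s) f i) == fixvec N w)]|
   / (INR 'C(N, colw N p)) ^ s)%R.

(* Pr_2(s,w1,w): probability that the OR of s such columns together with a
   fixed column y1 of weight w1 equals a fixed y of weight w, y1 <= y *)
Definition Pr2 (N : nat) (p : R) (s w1 w : nat) : R :=
  (INR #|[set f : {ffun 'I_s -> {set 'I_N}} |
            [forall i, #|f i| == colw N p] &&
            ((fixvec N w1 :|: \bigcup_(i < s) f i) == fixvec N w)]|
   / (INR 'C(N, colw N p)) ^ s)%R.

Definition Bnt (N t : nat) (p : R) (w1 w : nat) : R :=
  let q := (INR t * Pr2 N p 1 w1 w)%R in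
  if Rle_dec q (INR N) then
    (if Rle_dec (Rpower (INR t) (- / sqrt (L1 t))) q then INR N else L1 t / 10)%R
  else q.

Definition good3 (N t : nat) (p : R) (X : bmatrix N t) : Prop :=
  (forall y : {set 'I_N}, ~ has_config X y 1 (L1 t)) /\
  (forall y : {set 'I_N},
      ~ has_config X y 0 (10 * Rmax (INR t ^ 3 * Pr1 N p 3 #|y|) (INR N))%R) /\
  (forall y y1 : {set 'I_N}, y1 :|: y = y ->
      (INR #|[set j : 'I_t | y1 :|: X j == y]| < 10 * Bnt N t p #|y1| #|y|)%R) /\
  (forall (y : {set 'I_N}) (w1 : nat), w1 <= #|y| ->
     forall P : {set {set 'I_t}},
       (forall q, q \in P -> #|q| = 2 /\
            (\bigcup_(j in q) X j) :|: y = y /\ #|\bigcup_(j in q) X j| = w1) ->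
       (forall q1 q2, q1 \in P -> q2 \in P -> q1 != q2 -> [disjoint q1 & q2]) ->
       (INR #|P| < 10 * Rmax (INR N) (INR 'C(#|y|, w1) * INR t ^ 2 * Pr1 N p 2 w1))%R).

Definition degG' (N t : nat) (X : bmatrix N t) (y : {set 'I_N}) (v1 : 'I_t) : nat :=
  #|[set v2 : 'I_t | (v2 != v1) &&
      Rleb (3 * L1 t)%R (INR #|[set e in hedges X y | (v1 \in e) && (v2 \in e)]|)]|.

(* Main.v *)
Require Import Defs.
From mathcomp Require Import all_boot.
From Stdlib Require Import Reals Lra.
Set Implicit Arguments. Unset Strict Implicit.

Lemma card_bigcup_le (I T: finType) (F: {set I}) (f: I -> {set T}) :
  #|\bigcup_(i in F) f i| <= \sum_(i in F) #|f i|.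
Proof.
apply: (big_rec2 (fun (A : {set T}) n => #|A| <= n)); first by rewrite cards0.
move=> i A n _ IH; apply: leq_trans (leq_card_setU _ _) _.
by rewrite leq_add2l.
Qed.

Lemma three_eq (T: finType) (e: {set T}) a b c :
  #|e| = 3 -> a \in e -> b \in e -> c \in e -> a != b -> a != c -> b != c ->
  e = [set a; b; c].
Proof.
move=> he ha hb hc ab ac bc; apply/eqP; rewrite eq_sym eqEcard he.
rewrite !subUset !sub1set ha hb hc /=.
rewrite (setUC _ [set c]) cardsU1 cards2 ab !inE negb_or !(eq_sym c) ac bc.
done.
Qed.

Lemma three (T: finType) (e: {set T}) a b :
  #|e| = 3 -> a \in e -> b \in e -> a != b ->
  exists x, [/\ x != a, x != b & e = [set a; b; x]].
Proof.
move=> he ha hb ab.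
have : #|e :\ a :\ b| == 1.
  move: he; rewrite (cardsD1 a) ha (cardsD1 b (e :\ a)) !inE eq_sym ab hb.
  by move=> /eqP; rewrite /= !add1n !eqSS.
case/cards1P=> x hx.
have : x \in e :\ a :\ b by rewrite hx set11.
rewrite !inE => /and3P[xb xa xe].
exists x; split => //; apply: three_eq => //; by rewrite eq_sym.
Qed.

Definition star (T: finType) (v:T) (H: {set {set T}}) (F: {set {set T}}) : bool :=
 [forall e in F, (e \in H) && (v \in e)] &&
 [forall e1 in F, forall e2 in F, forall z, ((z \in e1) && (z \in e2) && (z != v)) ==> (e1 == e2)].

Definition Eu (T: finType) (v u:T) (H: {set {set T}}) := [set e in H | (v \in e) && (u \in e)].
Definition W (T: finType) (v:T) (F: {set {set T}}) := \bigcup_(e in F) (e :\ v).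

Section S.
Variables (T: finType) (v:T) (H: {set {set T}}).
Hypothesis hH : forall e, e \in H -> #|e| = 3.

Lemma star_mem (F : {set {set T}}) e : star v H F -> e \in F -> e \in H /\ v \in e.
Proof. by case/andP=> /forall_inP h _ /h /andP. Qed.

Lemma star_uniq (F : {set {set T}}) e1 e2 z : star v H F -> e1 \in F -> e2 \in F -> z \in e1 -> z \in e2 -> z != v -> e1 = e2.
Proof.
case/andP=> _ /forall_inP h h1 h2 z1 z2 zv.
by move: (h _ h1) => /forall_inP /(_ _ h2) /forallP /(_ z); rewrite z1 z2 zv => /eqP.
Qed.

Lemma star_intro (F : {set {set T}}) : (forall e, e \in F -> e \in H /\ v \in e) ->
  (forall e1 e2 z, e1 \in F -> e2 \in F -> z \in e1 -> z \in e2 -> z != v -> e1 = e2) -> star v H F.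
Proof.
move=> h1 h2; apply/andP; split.
  by apply/forall_inP => e /h1 [-> ->].
apply/forall_inP => e1 i1; apply/forall_inP => e2 i2; apply/forallP => z.
by apply/implyP => /andP [/andP [a b] c]; apply/eqP; apply: h2 c.
Qed.

Lemma star_sub (F F' : {set {set T}}) : star v H F -> F' \subset F -> star v H F'.
Proof.
move=> s /subsetP sub; apply: star_intro.
  by move=> e /sub; apply: star_mem s.
by move=> e1 e2 z /sub i1 /sub i2; apply: star_uniq s i1 i2.
Qed.

Lemma star_add (F : {set {set T}}) e : star v H F -> e \in H -> v \in e ->
  (forall z, z \in e -> z != v -> forall e', e' \in F -> z \notin e') -> star v H (e |: F).
Proof.
move=> s eH ve h; apply: star_intro.
  by move=> e' /setU1P [-> //|]; apply: star_mem s.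
move=> e1 e2 z /setU1P [->|i1] /setU1P [->|i2] z1 z2 zv //.
- by move: (h z z1 zv e2 i2); rewrite z2.
- by move: (h z z2 zv e1 i1); rewrite z1.
- by apply: star_uniq s i1 i2 z1 z2 zv.
Qed.

Lemma inW (F : {set {set T}}) e z : e \in F -> z \in e -> z != v -> z \in W v F.
Proof. by move=> i zi zv; apply/bigcupP; exists e => //; rewrite !inE zv. Qed.

Lemma cardW (F : {set {set T}}) : star v H F -> #|W v F| <= 2 * #|F|.
Proof.
move=> s; apply: leq_trans (card_bigcup_le _ _) _.
rewrite mulnC -sum_nat_const; apply: leq_sum => e i.
have [eH ve] := star_mem s i.
by move: (hH eH); rewrite (cardsD1 v) ve /= add1n => -[->].
Qed.

Lemma pick_free u (Y : {set T}) : u != v -> #|Y| < #|Eu v u H| ->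
  exists x, [/\ x \notin Y, x != v, x != u & [set v; u; x] \in H].
Proof.
move=> uv hc.
case: (boolP [exists x, [&& x \notin Y, x != v, x != u & [set v;u;x] \in H]]).
  by case/existsP=> x /and4P [a b c d]; exists x.
move=> hn; exfalso.
have sub : Eu v u H \subset [set [set v;u;x] | x in Y].
  apply/subsetP => e; rewrite inE => /and3P [eH ve ue].
  have vu : v != u by rewrite eq_sym.
  have [x [xv xu ee]] := three (hH eH) ve ue vu.
  apply/imsetP; exists x; last exact ee.
  case: (boolP (x \in Y)) => // xY.
  move/negP: hn; case; apply/existsP; exists x; by rewrite xY xv xu -ee eH.
have := leq_trans (subset_leq_card sub) (leq_imset_card _ _).
by rewrite leqNgt hc.
Qed.
End S.

Lemma core (T: finType) (v:T) (H: {set {set T}}) (Nb : {set T}) (F : {set {set T}}) :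
  (forall e, e \in H -> #|e| = 3) -> star v H F ->
  (forall F', star v H F' -> #|F'| <= #|F|) -> v \notin Nb ->
  (forall u, u \in Nb -> 2 * #|F| < #|Eu v u H|) -> #|Nb| <= #|F|.
Proof.
move=> hH s mx vN hu.
have uv : forall u, u \in Nb -> u != v by move=> u uN; apply: contraNneq vN => <-.
have cov : forall u, u \in Nb -> exists2 e, e \in F & u \in e.
  move=> u uN.
  case: (boolP [exists e in F, u \in e]); first by case/exists_inP=> e ? ?; exists e.
  move/exists_inPn=> hn; exfalso.
  have [x [xW xv xu eH]] := pick_free hH (Y := W v F) (uv u uN) (leq_ltn_trans (cardW hH s) (hu u uN)).
  have s' : star v H ([set v; u; x] |: F).
    apply: star_add => //; first by rewrite !inE eqxx.
    move=> z; rewrite !inE => /orP [/orP [/eqP -> | /eqP ->] | /eqP ->]; first by rewrite eqxx.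
      by move=> _ e' /hn.
    move=> _ e' ie'; apply/negP => xe'; move: xW; by rewrite (inW ie' xe' xv).
  have := mx _ s'; rewrite cardsU1.
  have -> : [set v; u; x] \notin F by apply/negP => /hn; rewrite !inE eqxx orbT.
  by rewrite add1n ltnn.
have inj : forall e a b, e \in F -> a \in Nb -> b \in Nb -> a \in e -> b \in e -> a = b.
  move=> e a b ie aN bN ae be; apply/eqP; apply/negPn/negP => ab.
  set F' := F :\ e.
  have s' : star v H F' by apply: star_sub s _; apply: subsetDl.
  have nin : forall w e', w \in Nb -> w \in e -> e' \in F' -> w \notin e'.
    move=> w e' wN we; rewrite !inE => /andP [e'e ie']; apply/negP => we'.
    by move: e'e; rewrite (star_uniq s ie' ie we' we (uv w wN)) eqxx.
  have cF : #|F| = #|F'|.+1 by rewrite (cardsD1 e) ie.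
  have cW := cardW hH s'.
  have ca : #|b |: W v F'| < #|Eu v a H|.
    apply: leq_ltn_trans (hu a aN); rewrite cardsU1 cF.
    apply: leq_trans (leq_add (leq_b1 _) cW) _; by rewrite mulnS leq_add2r.
  have [x [xY xv xa eaH]] := pick_free hH (uv a aN) ca.
  have cb : #|a |: (x |: W v F')| < #|Eu v b H|.
    apply: leq_ltn_trans (hu b bN); rewrite !cardsU1 cF.
    apply: leq_trans (leq_add (leq_b1 _) (leq_add (leq_b1 _) cW)) _; by rewrite mulnS addnA.
  have [z [zY zv zb ebH]] := pick_free hH (uv b bN) cb.
  move: xY zY; rewrite !inE !negb_or => /andP [xb xW] /and3P [za zx zW].
  have s1 : star v H ([set v; a; x] |: F').
    apply: star_add => //; first by rewrite !inE eqxx.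
    move=> y; rewrite !inE => /orP [/orP [/eqP -> | /eqP ->] | /eqP ->]; first by rewrite eqxx.
      by move=> _ e'; apply: nin.
    move=> _ e' ie'; apply/negP => xe'; move: xW; by rewrite (inW ie' xe' xv).
  have s2 : star v H ([set v; b; z] |: ([set v; a; x] |: F')).
    apply: star_add => //; first by rewrite !inE eqxx.
    move=> y; rewrite !inE => /orP [/orP [/eqP -> | /eqP ->] | /eqP ->]; first by rewrite eqxx.
      move=> bv e' /setU1P [-> | ie']; last by apply: nin.
      by rewrite !inE (negbTE bv) (eq_sym b a) (negbTE ab) (eq_sym b x) (negbTE xb).
    move=> _ e' /setU1P [-> | ie'].
      by rewrite !inE (negbTE zv) (negbTE za) (negbTE zx).
    apply/negP => ze'; move: zW; by rewrite (inW ie' ze' zv).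
  have := mx _ s2; rewrite !cardsU1 cF.
  have -> : [set v; a; x] \notin F'.
    by apply/negP => /(nin a _ aN ae); rewrite !inE eqxx orbT.
  have -> : [set v; b; z] \notin [set v; a; x] |: F'.
    rewrite in_setU1 negb_or; apply/andP; split.
      apply/negP => /eqP eq; have : b \in [set v; a; x] by rewrite -eq !inE eqxx orbT.
      by rewrite !inE (negbTE (uv b bN)) (eq_sym b a) (negbTE ab) (eq_sym b x) (negbTE xb).
    by apply/negP => /(nin b _ bN be); rewrite !inE eqxx orbT.
  by rewrite !add1n ltnn.
have sub : Nb \subset \bigcup_(e in F) (Nb :&: e).
  apply/subsetP => u uN; have [e ie ue] := cov u uN.
  by apply/bigcupP; exists e => //; rewrite inE uN ue.
apply: leq_trans (subset_leq_card sub) _; apply: leq_trans (card_bigcup_le _ _) _.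
rewrite -sum1_card; apply: leq_sum => e ie; apply/card_le1_eqP => a b.
rewrite !inE => /andP [aN ae] /andP [bN be]; exact: (inj e b a).
Qed.
Theorem lemma3 (N t : nat) (p : R) (X : bmatrix N t) (S : {set 'I_t}) :
  (0 < p < 1)%R ->
  good3 p X ->
  #|S| = 3 ->
  forall v1 : 'I_t, (INR (degG' X (rOR X S) v1) < L1 t)%R.
Proof.
move=> _ [g1 _] _ v1.
set y := rOR X S.
set H := hedges X y.
have hH : forall e, e \in H -> #|e| = 3.
  by move=> e; rewrite inE => /andP [/eqP -> _].
have s0 : star v1 H set0.
  by apply: star_intro => [e|e1 e2 z]; rewrite inE.
case: (arg_maxnP (fun F : {set {set 'I_t}} => #|F|) s0) => F0 sF0 mx.
have cf : config X y 1 F0.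
  split.
    by apply/subsetP => e /(star_mem sF0) [].
  exists [set v1]; split; first by rewrite cards1.
  move=> e1 e2 i1 i2 ne; apply/setP => z; rewrite !inE.
  have [-> | zv] := eqVneq z v1.
    by rewrite (star_mem sF0 i1).2 (star_mem sF0 i2).2.
  apply/negbTE/negP => /andP [z1 z2].
  by move: ne; rewrite (star_uniq sF0 i1 i2 z1 z2 zv) eqxx.
have hF0 : (INR #|F0| < L1 t)%R.
  apply: Rnot_le_lt => hle; apply: (g1 y); exists F0; split => //.
have hpos := pos_INR #|F0|.
have h2 : (2 * INR #|F0| < 3 * L1 t)%R by lra.
rewrite /degG'.
apply: (Rle_lt_trans _ (INR #|F0|)); last exact hF0.
apply: le_INR; apply/leP.
apply: (core hH sF0 mx).
  by rewrite inE eqxx.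
move=> u; rewrite inE => /andP [_]; rewrite /Rleb.
case: Rle_dec => // hr _.
apply/ltP; apply: INR_lt; rewrite mult_INR /=.
apply: (Rlt_le_trans _ (3 * L1 t)); [exact h2 | exact hr].
Qed.
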